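(* Let $(A=\bigoplus_{k\ge1}A_k,\bullet_i,\Delta)$ be a preshuffle bialgebra, let $q\ge0$, and let $x_1,\dots,x_q,y,z\in A$ be homogeneous primitive elements ($\Delta$ vanishes on each). Then $L^p_q(x_1,\dots,x_q;y;z)$ is primitive for every $1\le p\le|y|$.
   Context: A preshuffle algebra is a graded vector space $A=\bigoplus_{n\ge0}A_n$ with linear maps $\bullet_i:A_n\otimes A_m\to A_{n+m}$ ($0\le i\le m$) such that $(x\bullet_iy)\bullet_jz=x\bullet_{i+j}(y\bullet_jz)$ for $0\le i\le|y|$, $0\le j\le|z|$ ($|\cdot|$ denotes degree). A preshuffle bialgebra is a preshuffle algebra with $A_0=0$ and a coassociative coproduct $\Delta$ with $\Delta(A_n)\subseteq\bigoplus_{i=1}^{n-1}A_i\otimes A_{n-i}$ (Sweedler notation $\Delta(z)=\sum z_{(1)}\otimes z_{(2)}$) such that for homogeneous $x,y$: (1) $\Delta(x\bullet_0y)=\sum x_{(1)}\otimes(x_{(2)}\bullet_0y)+x\otimes y+\sum(x\bullet_0y_{(1)})\otimes y_{(2)}$; (2) for $1\le i\le|y|-1$: $\Delta(x\bullet_iy)=\sum_{|y_{(1)}|\le i}y_{(1)}\otimes(x\bullet_{i-|y_{(1)}|}y_{(2)})+\sum_{|y_{(1)}|=i}(x_{(1)}\bullet_iy_{(1)})\otimes(x_{(2)}\bullet_0y_{(2)})+\sum_{|y_{(1)}|\ge i}(x\bullet_iy_{(1)})\otimes y_{(2)}$; (3) $\Delta(x\bullet_{|y|}y)=\sum y_{(1)}\otimes(x\bullet_{|y_{(2)}|}y_{(2)})+y\otimes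 x+\sum(x_{(1)}\bullet_{|y|}y)\otimes x_{(2)}$. The operations $L^p_q$: for $q=0$, $L^p_0(y;z)=z\bullet_py$ if $0<p<|y|$, and $L^{|y|}_0(y;z)=z\bullet_{|y|}y-y\bullet_0z$. For $q\ge1$, with $N=\sum_{k=1}^q|x_k|$ and $N'=\sum_{k=2}^q|x_k|$: $L^p_q(x_1,\dots,x_q;y;z)=z\bullet_{p+N}(x_1\bullet_0\cdots\bullet_0x_q\bullet_0y)-x_1\bullet_0\big(z\bullet_{p+N'}(x_2\bullet_0\cdots\bullet_0x_q\bullet_0y)\big)$ (the product $\bullet_0$ is associative). *)

(* Defs.v *)
From HB Require Import structures.
From mathcomp Require Import all_boot all_order all_algebra.
Set Implicit Arguments. Unset Strict Implicit. Unset Printing Implicit Defensive.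
Import GRing.Theory.
Local Open Scope ring_scope.

(* Conventions:
   - A is modelled by an ambient K-vector space V with graded pieces
     Agr n : V -> Prop (the subspaces A_n), V being their direct sum.
   - mul i x y  stands for  x \bullet_i y.
   - Elements of V (x) V are represented by finite lists of pairs (formal sums
     of elementary tensors); two lists denote the same tensor iff every
     bilinear map out of V x V (into any K-vector space) takes the same value
     on them (universal property of the tensor product).  Likewise for V(x)V(x)V.
   - The coproduct is given in Sweedler form by  Delta : V -> seq (nat*V*V),
     each triple (j, a, b) standing for the elementary tensor a (x) b with
     a in A_j (the tag j records |a|, i.e. |z_(1)|). *)

Section Defs.
Variables (K : fieldType) (V : lmodType K).

Definition bilinear_map (W : lmodType K) (beta : V -> V -> W) : Prop :=
  (forall (c : K) (u v w : V), beta (c *: u + v) w = c *: beta u w + beta v w) /\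
  (forall (c : K) (u v w : V), beta w (c *: u + v) = c *: beta w u + beta w v).

Definition trilinear_map (W : lmodType K) (gamma : V -> V -> V -> W) : Prop :=
  (forall (c : K) (u v w1 w2 : V),
      gamma (c *: u + v) w1 w2 = c *: gamma u w1 w2 + gamma v w1 w2) /\
  (forall (c : K) (u v w1 w2 : V),
      gamma w1 (c *: u + v) w2 = c *: gamma w1 u w2 + gamma w1 v w2) /\
  (forall (c : K) (u v w1 w2 : V),
      gamma w1 w2 (c *: u + v) = c *: gamma w1 w2 u + gamma w1 w2 v).

Definition teq (s1 s2 : seq (V * V)) : Prop :=
  forall (W : lmodType K) (beta : V -> V -> W), bilinear_map beta ->
    \sum_(t <- s1) beta t.1 t.2 = \sum_(t <- s2) beta t.1 t.2.

Definition teq3 (s1 s2 : seq (V * V * V)) : Prop :=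
  forall (W : lmodType K) (gamma : V -> V -> V -> W), trilinear_map gamma ->
    \sum_(t <- s1) gamma t.1.1 t.1.2 t.2 = \sum_(t <- s2) gamma t.1.1 t.1.2 t.2.

Definition untag (s : seq (nat * V * V)) : seq (V * V) :=
  [seq (t.1.2, t.2) | t <- s].

Record preshuffle_bialgebra (Agr : nat -> V -> Prop) (mul : nat -> V -> V -> V)
    (Delta : V -> seq (nat * V * V)) : Prop := {
  gr_sub0 : forall n, Agr n 0;
  gr_subC : forall n (c : K) u v, Agr n u -> Agr n v -> Agr n (c *: u + v);
  gr_A0 : forall v, Agr 0 v -> v = 0;
  gr_span : forall v, exists (N : nat) (f : nat -> V),
      (forall n, Agr n (f n)) /\ v = \sum_(n < N) f n;
  gr_indep : forall (N : nat) (f : nat -> V), (forall n, Agr n (f n)) ->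
      \sum_(n < N) f n = 0 -> forall n, (n < N)%N -> f n = 0;
  mul_linl : forall i (c : K) u v w, mul i (c *: u + v) w = c *: mul i u w + mul i v w;
  mul_linr : forall i (c : K) u v w, mul i w (c *: u + v) = c *: mul i w u + mul i w v;
  mul_graded : forall i n m x y, Agr n x -> Agr m y -> (i <= m)%N ->
      Agr (n + m)%N (mul i x y);
  mul_assoc : forall i j n m k x y z, Agr n x -> Agr m y -> Agr k z ->
      (i <= m)%N -> (j <= k)%N ->
      mul j (mul i x y) z = mul (i + j)%N x (mul j y z);
  Delta_lin : forall (c : K) u v,
      teq (untag (Delta (c *: u + v)))
          ([seq (c *: t.1, t.2) | t <- untag (Delta u)] ++ untag (Delta v));
  Delta_graded : forall n x, Agr n x -> forall t, t \in Delta x ->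
      [/\ (0 < t.1.1)%N, (t.1.1 < n)%N, Agr t.1.1 t.1.2 & Agr (n - t.1.1)%N t.2];
  Delta_coassoc : forall x,
      teq3 (flatten [seq [seq (u.1.2, u.2, t.2) | u <- Delta t.1.2] | t <- Delta x])
           (flatten [seq [seq (t.1.2, u.1.2, u.2) | u <- Delta t.2] | t <- Delta x]);
  Delta_mul0 : forall n m x y, Agr n x -> Agr m y ->
      teq (untag (Delta (mul 0 x y)))
          ([seq (t.1.2, mul 0 t.2 y) | t <- Delta x] ++ [:: (x, y)] ++
           [seq (mul 0 x t.1.2, t.2) | t <- Delta y]);
  Delta_muli : forall i n m x y, Agr n x -> Agr m y -> (1 <= i)%N -> (i <= m - 1)%N ->
      teq (untag (Delta (mul i x y)))
          ([seq (t.1.2, mul (i - t.1.1)%N x t.2) | t <- Delta y & (t.1.1 <= i)%N] ++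
           flatten [seq [seq (mul i s.1.2 t.1.2, mul 0 s.2 t.2) | t <- Delta y
                          & (t.1.1 == i)%N] | s <- Delta x] ++
           [seq (mul i x t.1.2, t.2) | t <- Delta y & (i <= t.1.1)%N]);
  Delta_mulm : forall n m x y, Agr n x -> Agr m y ->
      teq (untag (Delta (mul m x y)))
          ([seq (t.1.2, mul (m - t.1.1)%N x t.2) | t <- Delta y] ++ [:: (y, x)] ++
           [seq (mul m t.1.2 y, t.2) | t <- Delta x])
}.

Definition primitive (Delta : V -> seq (nat * V * V)) (z : V) : Prop :=
  teq (untag (Delta z)) [::].

(* x_1 \bullet_0 ( ... \bullet_0 (x_q \bullet_0 y)) ; xs lists (|x_k|, x_k) *)
Definition chain0 (mul : nat -> V -> V -> V) (xs : seq (nat * V)) (y : V) : V :=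
  foldr (fun t acc => mul 0%N t.2 acc) y xs.

Definition degsum (xs : seq (nat * V)) : nat := (\sum_(t <- xs) t.1)%N.

(* L^p_q(x_1,...,x_q; y; z) with xs = [:: (|x_1|,x_1); ...; (|x_q|,x_q)],
   m = |y| *)
Definition Lop (mul : nat -> V -> V -> V) (p : nat) (xs : seq (nat * V))
    (y : V) (m : nat) (z : V) : V :=
  match xs with
  | [::] => if (p == m)%N then mul m z y - mul 0%N y z else mul p z y
  | t :: xs' => mul (p + degsum xs)%N z (chain0 mul xs y)
                - mul 0%N t.2 (mul (p + degsum xs')%N z (chain0 mul xs' y))
  end.

End Defs.

(* Main.v *)
Require Import Defs.
From HB Require Import structures.
From mathcomp Require Import all_boot all_order all_algebra.
From mathcomp Require Import zify.
From Stdlib Require Import IndefiniteDescription.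
Set Implicit Arguments. Unset Strict Implicit. Unset Printing Implicit Defensive.
Import GRing.Theory.
Local Open Scope ring_scope.

Section Helpers.
Variables (K : fieldType) (V : lmodType K).

Lemma bil0l (W : lmodType K) (beta : V -> V -> W) : bilinear_map beta ->
  forall w, beta 0 w = 0.
Proof.
move=> [hl _] w; have := hl 1 0 0 w; rewrite !scale1r addr0 => e.
by move/(congr1 (fun x => x - beta 0 w)): e; rewrite addrK subrr => ->.
Qed.

Lemma bil0r (W : lmodType K) (beta : V -> V -> W) : bilinear_map beta ->
  forall w, beta w 0 = 0.
Proof.
move=> [_ hr] w; have := hr 1 0 0 w; rewrite !scale1r addr0 => e.
by move/(congr1 (fun x => x - beta w 0)): e; rewrite addrK subrr => ->.
Qed.

Lemma bilZl (W : lmodType K) (beta : V -> V -> W) : bilinear_map beta ->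
  forall c u w, beta (c *: u) w = c *: beta u w.
Proof.
move=> hb c u w; have := (proj1 hb) c u 0 w; rewrite addr0 => ->.
by rewrite (bil0l hb) addr0.
Qed.

Lemma sum_widen (f : nat -> V) N1 N : (forall n, (N1 <= n)%N -> f n = 0) ->
  (N1 <= N)%N -> \sum_(n < N) f n = \sum_(n < N1) f n.
Proof.
move=> hz le; rewrite (big_ord_widen N f le) [RHS]big_mkcond /=.
apply: eq_bigr => i _; case: ifP => // /negbT; rewrite -leqNgt => h.
by rewrite hz.
Qed.

Variables (Agr : nat -> V -> Prop) (mul : nat -> V -> V -> V)
    (Delta : V -> seq (nat * V * V)).
Hypothesis H : preshuffle_bialgebra Agr mul Delta.

Definition dec v (f : nat -> V) := (forall n, Agr n (f n)) /\
  exists N, (forall n, (N <= n)%N -> f n = 0) /\ v = \sum_(n < N) f n.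

Lemma dec_exists v : exists f, dec v f.
Proof.
have [N [f [hf ->]]] := gr_span H v.
exists (fun n => if (n < N)%N then f n else 0); split.
  by move=> n; case: ifP => _ //; apply: (gr_sub0 H).
exists N; split; first by move=> n hn; rewrite ltnNge hn.
by apply: eq_bigr => i _; rewrite ltn_ord.
Qed.

Lemma dec_uniq v f g : dec v f -> dec v g -> forall n, f n = g n.
Proof.
move=> [hf [N1 [zf ef]]] [hg [N2 [zg eg]]] n.
pose h n := (-1) *: g n + f n.
have hh : forall n, Agr n (h n) by move=> k; apply: (gr_subC H).
have sh : \sum_(k < N1 + N2) h k = 0.
  rewrite big_split /= -scaler_sumr.
  rewrite (sum_widen zf (leq_addr _ _)) (sum_widen zg (leq_addl _ _)).
  by rewrite -ef -eg scaleN1r addNr.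
case: (ltnP n (N1 + N2)) => hn.
  have := gr_indep H hh sh hn; rewrite /h scaleN1r => /eqP.
  by rewrite addrC subr_eq0 => /eqP.
by rewrite zf ?zg //; lia.
Qed.

Definition projf v : nat -> V :=
  proj1_sig (constructive_indefinite_description _ (dec_exists v)).

Lemma projf_dec v : dec v (projf v).
Proof. exact: (proj2_sig (constructive_indefinite_description _ (dec_exists v))). Qed.

Lemma proj_hom k a : Agr k a -> forall j, projf a j = if j == k then a else 0.
Proof.
move=> ha; apply: (@dec_uniq a (projf a) (fun j => if j == k then a else 0) (projf_dec a)); split.
  by move=> n; case: eqP => [->|_] //; apply: (gr_sub0 H).
exists k.+1; split; first by move=> n hn; case: eqP => // e; lia.
rewrite big_ord_recr /= eqxx big1 ?add0r // => i _.
by rewrite (ltn_eqF (ltn_ord i)).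
Qed.

Lemma proj_lin c u v j : projf (c *: u + v) j = c *: projf u j + projf v j.
Proof.
have [hu [Nu [zu eu]]] := projf_dec u.
have [hv [Nv [zv ev]]] := projf_dec v.
apply: (@dec_uniq _ _ (fun n => c *: projf u n + projf v n) (projf_dec _)); split.
  by move=> n; apply: (gr_subC H).
exists (Nu + Nv); split.
  by move=> n hn; rewrite zu ?zv ?scaler0 ?addr0 //; lia.
rewrite big_split /= -scaler_sumr.
by rewrite (sum_widen zu (leq_addr _ _)) (sum_widen zv (leq_addl _ _)) -eu -ev.
Qed.

Definition betaF (W : lmodType K) (F : nat -> V -> V -> W) N (a b : V) : W :=
  \sum_(j < N) F j (projf a j) b.

Lemma betaF_bilin (W : lmodType K) (F : nat -> V -> V -> W) N :
  (forall j, bilinear_map (F j)) -> bilinear_map (betaF F N).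
Proof.
move=> hF; split=> c u v w; rewrite /betaF scaler_sumr -big_split /=;
  apply: eq_bigr => j _.
  by rewrite proj_lin (proj1 (hF j)).
by rewrite (proj2 (hF j)).
Qed.

Lemma betaF_hom (W : lmodType K) (F : nat -> V -> V -> W) N k a b :
  (forall j, bilinear_map (F j)) -> Agr k a -> (k < N)%N ->
  betaF F N a b = F k a b.
Proof.
move=> hF ha hk; rewrite /betaF (bigD1 (Ordinal hk)) //= (proj_hom ha) eqxx.
rewrite big1 ?addr0 // => j hj; rewrite (proj_hom ha).
case: eqP => e; last exact: (bil0l (hF _)).
by exfalso; move: hj; apply/negP; rewrite negbK; apply/eqP/val_inj.
Qed.


Definition Dt v (s : seq (nat * V * V)) := forall (W : lmodType K)
  (F : nat -> V -> V -> W), (forall j, bilinear_map (F j)) ->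
  \sum_(t <- Delta v) F t.1.1 t.1.2 t.2 = \sum_(t <- s) F t.1.1 t.1.2 t.2.

Lemma teq_sum v L (W : lmodType K) (beta : V -> V -> W) :
  teq (Defs.untag (Delta v)) L -> bilinear_map beta ->
  \sum_(t <- Delta v) beta t.1.2 t.2 = \sum_(t <- L) beta t.1 t.2.
Proof. by move=> e hb; rewrite -(e W beta hb) /Defs.untag big_map. Qed.

Lemma prim_sum v (W : lmodType K) (beta : V -> V -> W) :
  primitive Delta v -> bilinear_map beta ->
  \sum_(t <- Delta v) beta t.1.2 t.2 = 0.
Proof. by move=> e hb; rewrite (teq_sum e hb) big_nil. Qed.

Lemma Dt_of_teq n v L : Agr n v -> teq (Defs.untag (Delta v)) L ->
  forall (W : lmodType K) (F : nat -> V -> V -> W), (forall j, bilinear_map (F j)) ->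
  \sum_(t <- Delta v) F t.1.1 t.1.2 t.2 = \sum_(t <- L) betaF F n t.1 t.2.
Proof.
move=> hv e W F hF; rewrite -(teq_sum e (betaF_bilin n hF)).
rewrite [RHS]big_seq [LHS]big_seq; apply: eq_bigr => t ht.
have [_ hlt ha _] := Delta_graded H hv ht.
by rewrite (betaF_hom _ hF ha hlt).
Qed.

Lemma Dt_base m y : Agr m y -> primitive Delta y -> Dt y [::].
Proof. by move=> hy hp W F hF; rewrite (Dt_of_teq hy hp hF) !big_nil. Qed.

Lemma Dt_filter v s (P : pred nat) (W : lmodType K) (G : nat -> V -> V -> W) :
  Dt v s -> (forall j, bilinear_map (G j)) ->
  \sum_(t <- Delta v | P t.1.1) G t.1.1 t.1.2 t.2 =
  \sum_(t <- s | P t.1.1) G t.1.1 t.1.2 t.2.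
Proof.
move=> hD hG; rewrite big_mkcond [RHS]big_mkcond.
have := hD W (fun j a b => if P j then G j a b else 0).
apply => j; case: (P j); first exact: hG.
by split=> *; rewrite scaler0 addr0.
Qed.

Fixpoint Sx (xs : seq (nat * V)) (y : V) : seq (nat * V * V) :=
  match xs with
  | [::] => [::]
  | t :: xs' => (t.1, t.2, chain0 mul xs' y) ::
      [seq ((t.1 + u.1.1)%N, mul 0 t.2 u.1.2, u.2) | u <- Sx xs' y]
  end.

Lemma chain_props xs y m :
  (forall t, t \in xs -> Agr t.1 t.2 /\ primitive Delta t.2) ->
  Agr m y -> primitive Delta y -> (0 < m)%N ->
  [/\ Agr (degsum xs + m)%N (chain0 mul xs y), Dt (chain0 mul xs y) (Sx xs y)
    & forall u, u \in Sx xs y -> Agr u.1.1 u.1.2 /\ (u.1.1 <= degsum xs)%N].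
Proof.
move=> + hy hpy hm; elim: xs => [|[n1 X] xs IH] hxs.
  split => //; first by rewrite /degsum big_nil add0n.
  exact: Dt_base hy hpy.
have [hX hpX] := hxs (n1, X) (mem_head _ _).
have [hw hD hS] : [/\ Agr (degsum xs + m)%N (chain0 mul xs y), Dt (chain0 mul xs y) (Sx xs y)
    & forall u, u \in Sx xs y -> Agr u.1.1 u.1.2 /\ (u.1.1 <= degsum xs)%N].
  by apply: IH => t ht; apply: hxs; rewrite in_cons ht orbT.
have dcons : degsum ((n1, X) :: xs) = (n1 + degsum xs)%N by rewrite /degsum big_cons.
rewrite dcons /=; set w := chain0 mul xs y.
split.
- by rewrite -addnA; apply: (mul_graded H) hX hw _.
- move=> W F hF.
  have hm0 : Agr (n1 + (degsum xs + m))%N (mul 0 X w) by apply: (mul_graded H) hX hw _.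
  rewrite (Dt_of_teq hm0 (Delta_mul0 H hX hw) hF).
  rewrite !big_cat !big_map big_cons /= big_cons big_nil addr0 big_map.
  have hb := betaF_bilin (n1 + (degsum xs + m))%N hF.
  rewrite (prim_sum (beta := fun a b => betaF F (n1 + (degsum xs + m)) a (mul 0 b w))) //; last first.
    split=> c u v w1 /=; first by rewrite (proj1 hb).
    by rewrite (mul_linl H) (proj2 hb).
  rewrite add0r (betaF_hom _ hF hX); last by rewrite /=; lia.
  congr (_ + _).
  rewrite (hD W (fun _ a b => betaF F (n1 + (degsum xs + m)) (mul 0 X a) b)); last first.
    move=> _; split=> c u v w1 /=; last by rewrite (proj2 hb).
    by rewrite (mul_linr H) (proj1 hb).
  rewrite big_seq [RHS]big_seq; apply: eq_bigr => u hu.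
  have [hu1 hu2] := hS u hu.
  rewrite (betaF_hom _ hF (mul_graded H hX hu1 (leq0n _))) //=.
  by rewrite ltn_add2l (leq_ltn_trans hu2) // -{1}(addn0 (degsum xs)) ltn_add2l.
- move=> u; rewrite in_cons => /orP [/eqP -> | /mapP [u' hu' ->]] /=.
    by split => //; rewrite leq_addr.
  have [h1 h2] := hS u' hu'; split; first exact: (mul_graded H) hX h1 _.
  by rewrite leq_add2l.
Qed.

End Helpers.



Section Main.
Variables (K : fieldType) (V : lmodType K).
Variables (Agr : nat -> V -> Prop) (mul : nat -> V -> V -> V)
    (Delta : V -> seq (nat * V * V)).
Hypothesis H : preshuffle_bialgebra Agr mul Delta.

Definition linf (f : V -> V) := forall (c : K) u v, f (c *: u + v) = c *: f u + f v.

Lemma bil_comp (W : lmodType K) (beta : V -> V -> W) f g :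
  bilinear_map beta -> linf f -> linf g ->
  bilinear_map (fun a b => beta (f a) (g b)).
Proof.
move=> [hl hr] hf hg; split=> c u v w /=; first by rewrite hf hl.
by rewrite hg hr.
Qed.

Lemma linf_id : linf id. Proof. by []. Qed.
Lemma linf_r i x : linf (mul i x). Proof. by move=> c u v; rewrite (mul_linr H). Qed.
Lemma linf_l i x : linf (fun a => mul i a x). Proof. by move=> c u v; rewrite (mul_linl H). Qed.

Lemma sum_muli (W : lmodType K) (beta : V -> V -> W) i n m x y s :
  Agr n x -> Agr m y -> (1 <= i)%N -> (i <= m - 1)%N -> bilinear_map beta ->
  Dt Delta y s -> (forall u, u \in s -> (u.1.1 < i)%N) ->
  \sum_(t <- Delta (mul i x y)) beta t.1.2 t.2 =
  \sum_(u <- s) beta u.1.2 (mul (i - u.1.1) x u.2).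
Proof.
move=> hx hy hi1 hi2 hb hD hlt.
rewrite (teq_sum (Delta_muli H hx hy hi1 hi2) hb) !big_cat /=.
have e1 : \sum_(t <- [seq (t.1.2, mul (i - t.1.1)%N x t.2) | t <- Delta y & (t.1.1 <= i)%N])
    beta t.1 t.2 = \sum_(u <- s) beta u.1.2 (mul (i - u.1.1) x u.2).
  rewrite big_map big_filter.
  rewrite (Dt_filter (fun j => (j <= i)%N)
     (G := fun j a b => beta a (mul (i - j) x b)) hD); last first.
    by move=> j; apply: bil_comp hb linf_id (linf_r _ _).
  rewrite big_seq_cond [RHS]big_seq; apply: eq_bigl => u.
  by case hu: (u \in s) => //=; exact: ltnW (hlt u hu).
have e3 : \sum_(t <- [seq (mul i x t.1.2, t.2) | t <- Delta y & (i <= t.1.1)%N])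
    beta t.1 t.2 = 0.
  rewrite big_map big_filter.
  rewrite (Dt_filter (fun j => (i <= j)%N)
     (G := fun j a b => beta (mul i x a) b) hD); last first.
    by move=> j; apply: bil_comp hb (linf_r _ _) linf_id.
  rewrite big_seq_cond big1 // => u /andP [hu hle].
  by have := hlt u hu; rewrite ltnNge hle.
rewrite e1 e3 addr0 -[RHS]addr0; congr (_ + _).
rewrite big_flatten /= big_map big1 // => s0 _.
rewrite big_map big_filter.
rewrite (Dt_filter (fun j => (j == i)%N)
   (G := fun j a b => beta (mul i s0.1.2 a) (mul 0 s0.2 b)) hD); last first.
  by move=> j; apply: bil_comp hb (linf_r _ _) (linf_r _ _).
rewrite big_seq_cond big1 // => u /andP [hu heq].
by have := hlt u hu; rewrite (eqP heq) ltnn.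
Qed.

Lemma sum_mulm (W : lmodType K) (beta : V -> V -> W) n m x y s :
  Agr n x -> Agr m y -> bilinear_map beta -> primitive Delta x ->
  Dt Delta y s ->
  \sum_(t <- Delta (mul m x y)) beta t.1.2 t.2 =
  \sum_(u <- s) beta u.1.2 (mul (m - u.1.1) x u.2) + beta y x.
Proof.
move=> hx hy hb hpx hD.
rewrite (teq_sum (Delta_mulm H hx hy) hb) !big_cat /= big_cons big_nil addr0 !big_map /=.
rewrite (prim_sum (beta := fun a b => beta (mul m a y) b) hpx); last first.
  by apply: bil_comp hb (linf_l _ _) linf_id.
rewrite addr0; congr (_ + _).
apply: (hD W (fun j a b => beta a (mul (m - j) x b))).
by move=> j; apply: bil_comp hb linf_id (linf_r _ _).
Qed.

Lemma sum_mul0 (W : lmodType K) (beta : V -> V -> W) n m x y :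
  Agr n x -> Agr m y -> bilinear_map beta -> primitive Delta x ->
  \sum_(t <- Delta (mul 0 x y)) beta t.1.2 t.2 =
  beta x y + \sum_(t <- Delta y) beta (mul 0 x t.1.2) t.2.
Proof.
move=> hx hy hb hpx.
rewrite (teq_sum (Delta_mul0 H hx hy) hb) !big_cat /= big_cons !big_map /=.
rewrite (prim_sum (beta := fun a b => beta a (mul 0 b y)) hpx) ?add0r //.
  by rewrite big_nil addr0.
exact: (@bil_comp _ _ id (fun b => mul 0 b y) hb linf_id (linf_l _ _)).
Qed.

Lemma prim_sub a b :
  (forall (W : lmodType K) (beta : V -> V -> W), bilinear_map beta ->
    \sum_(t <- Delta a) beta t.1.2 t.2 = \sum_(t <- Delta b) beta t.1.2 t.2) ->
  primitive Delta (a - b).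
Proof.
move=> e W beta hb; rewrite big_nil.
have := Delta_lin H (-1) b a; rewrite scaleN1r addrC => hl.
rewrite (hl W beta hb) big_cat /= !big_map /=.
under eq_bigr do rewrite (bilZl hb) scaleN1r.
by rewrite sumrN (e W beta hb) addNr.
Qed.

End Main.

Local Close Scope ring_scope.

Theorem mainTheorem18 (K : fieldType) (V : lmodType K)
    (Agr : nat -> V -> Prop) (mul : nat -> V -> V -> V)
    (Delta : V -> seq (nat * V * V)) :
  preshuffle_bialgebra Agr mul Delta ->
  forall (xs : seq (nat * V)) (y z : V) (m l : nat),
    (forall t, t \in xs -> Agr t.1 t.2 /\ primitive Delta t.2) ->
    Agr m y -> primitive Delta y ->
    Agr l z -> primitive Delta z ->
    forall p : nat, (1 <= p)%N -> (p <= m)%N ->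
      primitive Delta (Lop mul p xs y m z).
Proof.
move=> H xs y z m l hxs hy hpy hz hpz p hp1 hpm.
have hm : (0 < m)%N by apply: leq_trans hpm.
case: xs hxs => [|[n1 X] xs'] hxs.
  rewrite /Lop; case: eqP => [epm|/eqP npm].
    subst p; apply: (prim_sub H) => W beta hb.
    rewrite (sum_mulm H hz hy hb hpz (Dt_base H hy hpy)) big_nil GRing.add0r.
    rewrite (sum_mul0 H hy hz hb hpy).
    rewrite (prim_sum (beta := fun a b => beta (mul 0 y a) b) hpz) ?GRing.addr0 //.
    exact: (bil_comp (f := mul 0 y) (g := id) hb (linf_r H _ _) (@linf_id _ _)).
  move=> W beta hb; rewrite big_nil /Defs.untag big_map /=.
  rewrite (sum_muli H (s := [::]) hz hy hp1 _ hb (Dt_base H hy hpy)) ?big_nil //.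
  by lia.
have [hX hpX] := hxs (n1, X) (mem_head _ _).
have hxs' : forall t, t \in xs' -> Agr t.1 t.2 /\ primitive Delta t.2.
  by move=> t ht; apply: hxs; rewrite in_cons ht orbT.
have [hw hD hS] := chain_props H hxs hy hpy hm.
have [hw' hD' hS'] := chain_props H hxs' hy hpy hm.
have dcons : degsum ((n1, X) :: xs') = (n1 + degsum xs')%N by rewrite /degsum big_cons.
rewrite /Lop /= dcons.
rewrite /= dcons in hw hD hS.
set w' := chain0 mul xs' y in hw hD hS hw' hD' hS' *.
set N' := degsum xs' in hw hD hS hw' hD' hS' *.
apply: (prim_sub H) => W beta hb.
have hu_deg : Agr (l + (N' + m)) (mul (p + N') z w').
  by apply: (mul_graded H) hz hw' _; lia.
rewrite (sum_mul0 H hX hu_deg hb hpX).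
have hb' : bilinear_map (fun a b => beta (mul 0 X a) b).
  exact: (bil_comp (f := mul 0 X) (g := id) hb (linf_r H _ _) (@linf_id _ _)).
rewrite /=.
case: (ltnP p m) => hpm'.
  rewrite (sum_muli H (s := (n1, X, w') :: [seq ((n1 + u.1.1)%N, mul 0 X u.1.2, u.2) | u <- Sx mul xs' y]) hz hw _ _ hb hD); first last.
  - by move=> u /hS [_ h]; apply: leq_ltn_trans h _; rewrite -{1}(add0n (n1 + N')) ltn_add2r.
  - by lia.
  - by lia.
  rewrite (sum_muli H (s := Sx mul xs' y) (beta := fun a b => beta (mul 0 X a) b) hz hw' _ _ hb' hD'); first last.
  - by move=> u /hS' [_ h]; apply: leq_ltn_trans h _; rewrite -{1}(add0n N') ltn_add2r.
  - by lia.
  - by lia.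
  rewrite big_cons big_map /=.
  have -> : (p + (n1 + N') - n1 = p + N')%N by lia.
  congr (GRing.add _ _); apply: eq_bigr => u _.
  by have -> : (p + (n1 + N') - (n1 + u.1.1) = p + N' - u.1.1)%N by lia.
have ep : p = m by lia.
subst p.
rewrite (_ : (m + (n1 + N'))%N = (n1 + N' + m)%N); last by lia.
rewrite (_ : (m + N')%N = (N' + m)%N); last by lia.
rewrite (sum_mulm H hz hw hb hpz hD).
rewrite (sum_mulm H (beta := fun a b => beta (mul 0 X a) b) hz hw' hb' hpz hD').
rewrite big_cons big_map /= !GRing.addrA.
have -> : (n1 + N' + m - n1 = N' + m)%N by lia.
congr (GRing.add (GRing.add _ _) _); apply: eq_bigr => u _.
by have -> : (n1 + N' + m - (n1 + u.1.1) = N' + m - u.1.1)%N by lia.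
Qed.
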